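(* Let $\mathcal{S}=\{S_1,\dots,S_N\}\subset\mathbb{R}^Q_{\ge0}$ be a finite set of service vectors and suppose the system is overloaded, $\rho\notin\mathcal{P}$. Let $\theta\in\mathbb{R}^Q_{\ge0}$ with $\sum_q\theta_q=1$ be a fairness criterion. Let $X(t)$ be the workload under the MaxWeight policy with some diagonal positive definite matrix $\Delta$, and let $\bar X(t)$ be the workload under some other scheduling algorithm (choosing a service vector from $\mathcal{S}$ in each slot, with the same queue dynamics), such that $$\lim_{t\to\infty}\frac{X(t)}{t}=\eta,\qquad \lim_{t\to\infty}\frac{\bar X(t)}{t}=\bar\eta,$$ and both achieve the fairness criterion: $\frac{\eta_q}{\sum_k\eta_k}=\frac{\bar\eta_q}{\sum_k\bar\eta_k}=\theta_q$ for all $q$. Then $\eta\le\bar\eta$ (componentwise), i.e. $\eta$ is the minimal scaled workload vector achieving the fairness criterion $\theta$.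
   Context: Model: $Q$ queues, discrete time $t=0,1,2,\dots$. Arrivals $A(t)$ with $0\le A_q(t)\le\bar A_q<\infty$ and $\rho_q=\lim_{t\to\infty}\frac1t\sum_{s=0}^{t-1}A_q(s)\in(0,\infty)$. In slot $t$ a service vector $S(t)\in\mathcal{S}$ is used; departures $D_q(t)=\min\{S_q(t),X_q(t)\}$; $X(t+1)=X(t)+A(t)-D(t)$, $X(0)=0$. MaxWeight with matrix $\Delta$ (diagonal, positive diagonal entries): $S(t)\in\arg\max_{S\in\mathcal{S}}\langle S,\Delta X(t)\rangle$. Stability region $\mathcal{P}=\{r\in\mathbb{R}^Q_{\ge0}: r\le\sum_n\alpha_nS_n\text{ for some }\alpha_n\ge0,\ \sum_n\alpha_n=1\}$. *)

(* Defs.v *)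
From HB Require Import structures.
From mathcomp Require Import all_boot all_order all_algebra.
From mathcomp Require Import all_classical all_reals all_analysis.
Set Implicit Arguments. Unset Strict Implicit. Unset Printing Implicit Defensive.
Import Order.TTheory GRing.Theory Num.Theory.
Import numFieldNormedType.Exports.
Local Open Scope ring_scope.

Section Queue.
Variables (R : realType) (Q N : nat).

(* Workload X(t) under a schedule sigma : nat -> 'I_N (service vector used
   in slot t), arrivals A:
   X(0)=0, X(t+1) = X(t) + A(t) - D(t), D_q(t) = min(S_q(t), X_q(t)). *)
Fixpoint workload (A : nat -> 'I_Q -> R) (S : 'I_N -> 'I_Q -> R)
  (sigma : nat -> 'I_N) (t : nat) : 'I_Q -> R :=
  match t with
  | 0%N => fun _ => 0
  | t'.+1 => fun q =>
      let X := workload A S sigma t' in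
      X q + A t' q - Num.min (S (sigma t') q) (X q)
  end.

(* <S, Delta X> for Delta = diag(delta). *)
Definition weight (delta : 'I_Q -> R) (s X : 'I_Q -> R) : R :=
  \sum_(q < Q) s q * (delta q * X q).

Definition is_maxweight (A : nat -> 'I_Q -> R) (S : 'I_N -> 'I_Q -> R)
  (delta : 'I_Q -> R) (sigma : nat -> 'I_N) : Prop :=
  forall (t : nat) (n : 'I_N),
    weight delta (S n) (workload A S sigma t) <=
    weight delta (S (sigma t)) (workload A S sigma t).

Definition stab_region (S : 'I_N -> 'I_Q -> R) (r : 'I_Q -> R) : Prop :=
  (forall q, 0 <= r q) /\
  exists alpha : 'I_N -> R,
    (forall n, 0 <= alpha n) /\ \sum_(n < N) alpha n = 1 /\
    forall q, r q <= \sum_(n < N) alpha n * S n q.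

End Queue.

(* Main.v *)
Require Import Defs.
From HB Require Import structures.
From mathcomp Require Import all_boot all_order all_algebra.
From mathcomp Require Import all_classical all_reals all_analysis.
From mathcomp Require Import ring lra.
Import Order.TTheory GRing.Theory Num.Theory.
Import numFieldNormedType.Exports.
Local Open Scope classical_set_scope.
Local Open Scope ring_scope.

Lemma ev_ex (P : nat -> Prop) :
  (\forall t \near \oo, P t) -> exists T, forall t, (T <= t)%N -> P t.
Proof. by case=> T _ HT; exists T. Qed.

Lemma ev_gt (R : realType) (c : R) : \forall t \near \oo, c < (t%:R : R).
Proof.
apply: filterS (nbhs_infty_ge (Num.Def.truncn c).+1) => t /= Ht.
apply: lt_le_trans (truncnS_gt c) _; by rewrite ler_nat.
Qed.

Lemma lim_ge0 (R : realType) (f : nat -> R) l :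
  f @ \oo --> l -> (forall t, 0 <= f t) -> 0 <= l.
Proof.
move=> h f0; rewrite -(cvg_lim _ h) //; apply: limr_ge; first by apply/cvg_ex; exists l.
exact: nearW.
Qed.

Lemma cvg_sumQ (R : realType) (Q : nat) (f : 'I_Q -> nat -> R) (l : 'I_Q -> R) :
  (forall q, f q @ \oo --> l q) ->
  (fun t => \sum_(q < Q) f q t) @ \oo --> \sum_(q < Q) l q.
Proof. move=> h; apply: cvg_big => //; exact: add_continuous. Qed.

Lemma workload_ge0 (R : realType) Q N (A : nat -> 'I_Q -> R)
  (S : 'I_N -> 'I_Q -> R) sig :
  (forall t q, 0 <= A t q) -> forall t q, 0 <= workload A S sig t q.
Proof.
move=> A0; elim=> [|t IH] q /=; first by [].
have := A0 t q; have := IH q.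
have : Num.min (S (sig t) q) (workload A S sig t q) <= workload A S sig t q.
  by rewrite ge_min lexx orbT.
lra.
Qed.

Theorem theorem2 (R : realType) (Q N : nat)
  (S : 'I_N -> 'I_Q -> R)
  (A : nat -> 'I_Q -> R) (Abar rho : 'I_Q -> R)
  (theta delta : 'I_Q -> R)
  (sigma sigmabar : nat -> 'I_N)
  (eta etabar : 'I_Q -> R) :
  (forall n q, 0 <= S n q) ->
  (forall t q, 0 <= A t q /\ A t q <= Abar q) ->
  (forall q, (fun t : nat => (t%:R)^-1 * \sum_(s < t) A s q) @ \oo --> rho q) ->
  (forall q, 0 < rho q) ->
  ~ stab_region S rho ->
  (forall q, 0 <= theta q) -> \sum_(q < Q) theta q = 1 ->
  (forall q, 0 < delta q) ->
  is_maxweight A S delta sigma ->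
  (forall q, (fun t : nat => workload A S sigma t q / t%:R) @ \oo --> eta q) ->
  (forall q, (fun t : nat => workload A S sigmabar t q / t%:R) @ \oo --> etabar q) ->
  (forall q, eta q / (\sum_(k < Q) eta k) = theta q) ->
  (forall q, etabar q / (\sum_(k < Q) etabar k) = theta q) ->
  forall q, eta q <= etabar q.
Proof.
move=> HS HA _ _ _ Hth0 Hth1 Hdel Hmw Heta Hetab Hr Hrb q0.
set X := workload A S sigma.
set Y := workload A S sigmabar.
have A0 : forall t q, 0 <= A t q by move=> t q; case: (HA t q).
have X0 : forall t q, 0 <= X t q by exact: workload_ge0.
have eta0 : forall q, 0 <= eta q.
  move=> q; have := @lim_ge0 R _ _ (Heta q); apply => t; exact: divr_ge0.
set a := \sum_(k < Q) eta k in Hr.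
set b := \sum_(k < Q) etabar k in Hrb.
have nz : forall (c : R) (v : 'I_Q -> R), (forall q, v q / c = theta q) -> c != 0.
  move=> c v h; apply/negP=> /eqP c0.
  have : \sum_(q < Q) theta q = 0 by apply: big1 => q _; rewrite -h c0 invr0 mulr0.
  by rewrite Hth1 => /eqP; rewrite oner_eq0.
have a0 := nz _ _ Hr.
have b0 := nz _ _ Hrb.
have etaE : forall q, eta q = theta q * a by move=> q; rewrite -(Hr q) divfK.
have etabE : forall q, etabar q = theta q * b by move=> q; rewrite -(Hrb q) divfK.
have a_gt0 : 0 < a by rewrite lt_def a0 sumr_ge0.
pose w := fun q => delta q * eta q.
have w0 : forall q, 0 <= w q by move=> q; rewrite mulr_ge0 // ltW.
pose L := \sum_(q < Q) w q * (etabar q - eta q).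
have key : 0 <= L.
  pose Sm := fun q => \sum_(n < N) S n q.
  have Sm_ge : forall n q, S n q <= Sm q.
    by move=> n q; rewrite /Sm (bigD1 n) //= lerDl sumr_ge0.
  pose K := \sum_(q < Q) Sm q * delta q.
  have K0 : 0 <= K.
    by apply: sumr_ge0 => q _; rewrite mulr_ge0 ?sumr_ge0 // ltW.
  pose u t := \sum_(q < Q) w q * (Num.min (S (sigma t) q) (X t q) - S (sigmabar t) q).
  pose V t := \sum_(q < Q) w q * (Y t q - X t q).
  have Vstep : forall t, V t + u t <= V t.+1.
    move=> t; rewrite /V /u -big_split /=; apply: ler_sum => q _.
    rewrite -mulrDr; apply: ler_wpM2l => //.
    rewrite /Y /X /=.
    have : Num.min (S (sigmabar t) q) (workload A S sigmabar t q) <= S (sigmabar t) q.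
      by rewrite ge_min lexx.
    lra.
  have claim : forall e, 0 < e -> \forall t \near \oo, - ((K + K) * e) <= u t.
    move=> e e0.
    have N1 : \forall t \near \oo, forall q, 0 < eta q -> Sm q < X t q.
      apply: filter_forall => q.
      case: (ltP 0 (eta q)) => [eq0|eq0]; last first.
        by apply: nearW => t h; exfalso; lra.
      have hlt : eta q / 2 < eta q by lra.
      have h1 : \forall t \near \oo, eta q / 2 < X t q / t%:R.
        by apply: cvgr_gt (Heta q) _ hlt.
      have h2 := @ev_gt _ (2 * Sm q / eta q).
      apply: filterS2 h1 h2 => t H1 H2 _.
      have Sm0 : 0 <= Sm q by apply: sumr_ge0.
      have tpos : 0 < (t%:R : R).
        by apply: le_lt_trans H2; rewrite divr_ge0 ?mulr_ge0 // ltW.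
      have -> : Sm q = eta q / 2 * (2 * Sm q / eta q) by field; rewrite gt_eqF.
      rewrite -[X t q](divfK (lt0r_neq0 tpos)).
      apply: (@lt_trans _ _ (eta q / 2 * t%:R)).
        by rewrite ltr_pM2l // divr_gt0.
      by rewrite ltr_pM2r.
    have N2 : \forall t \near \oo, forall q, `|eta q - X t q / t%:R| < e.
      by apply: filter_forall => q; exact: (cvgrPdist_lt _ _).1 (Heta q) e e0.
    apply: filterS3 N1 N2 (nbhs_infty_ge 1) => t H1 H2 H3.
    have MW := Hmw t (sigmabar t); rewrite /weight -/X in MW.
    pose G n := \sum_(q < Q) w q * S n q.
    have uE : u t = G (sigma t) - G (sigmabar t).
      rewrite /u /G -sumrB; apply: eq_bigr => q _.
      case: (ltP 0 (eta q)) => h.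
        rewrite min_l; first by rewrite mulrBr.
        exact: ltW (le_lt_trans (Sm_ge _ _) (H1 q h)).
      have h0 : eta q = 0 by apply/eqP; rewrite eq_le h eta0.
      by rewrite /w h0 mulr0 !mul0r subrr.
    pose H n := \sum_(q < Q) S n q * (delta q * (X t q / t%:R)).
    have HE : forall n, H n = (\sum_(q < Q) S n q * (delta q * X t q)) / t%:R.
      by move=> n; rewrite /H mulr_suml; apply: eq_bigr => q _; rewrite !mulrA.
    have Hmono : H (sigmabar t) <= H (sigma t).
      by rewrite !HE; apply: ler_wpM2r MW; rewrite invr_ge0 ler0n.
    have GH : forall n, `|G n - H n| <= K * e.
      move=> n.
      have -> : G n - H n = \sum_(q < Q) (S n q * delta q) * (eta q - X t q / t%:R).
        by rewrite /G /H -sumrB; apply: eq_bigr => q _; rewrite /w; ring.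
      apply: le_trans (ler_norm_sum _ _ _) _.
      rewrite /K mulr_suml; apply: ler_sum => q _.
      rewrite normrM (ger0_norm (mulr_ge0 (HS n q) (ltW (Hdel q)))).
      apply: ler_pM.
      - by rewrite mulr_ge0 // ltW.
      - by [].
      - by apply: ler_wpM2r (Sm_ge n q); rewrite ltW.
      - exact: ltW.
    have := GH (sigma t); have := GH (sigmabar t); rewrite !ler_norml uE mulrDl.
    move=> /andP[? ?] /andP[? ?]; lra.
  have cvgV : (fun t => V t / t%:R) @ \oo --> L.
    have -> : (fun t => V t / t%:R) =
        (fun t => \sum_(q < Q) w q * (Y t q / t%:R - X t q / t%:R)).
      apply: funext => t; rewrite /V mulr_suml; apply: eq_bigr => q _.
      by rewrite -mulrA mulrBl.
    apply: cvg_sumQ => q.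
    apply: cvgM; first exact: cvg_cst.
    exact: cvgB (Hetab q) (Heta q).
  pose c := K + K + 1.
  have c0 : 0 < c by rewrite /c; lra.
  apply/ler_addgt0Pr => e e0.
  have e'0 : 0 < e / c by rewrite divr_gt0.
  set e' := e / c in e'0.
  have [T HT] := @ev_ex (fun t => - ((K + K) * e') <= u t) (claim e' e'0).
  set d := (K + K) * e' in HT.
  have d0 : 0 <= d by rewrite /d mulr_ge0 ?addr_ge0 // ltW.
  have Vlow : forall k, V T - k%:R * d <= V (T + k)%N.
    elim=> [|k IH]; first by rewrite addn0 mul0r subr0.
    have := Vstep (T + k)%N; have := HT (T + k)%N (leq_addr _ _).
    rewrite addnS -[k.+1]addn1 natrD mulrDl mul1r; lra.
  have Hlim : - (e' + d) <= L.
    rewrite -(cvg_lim _ cvgV) //; apply: limr_ge; first by apply/cvg_ex; exists L.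
    apply: filterS2 (@ev_gt _ (`|V T| / e')) (nbhs_infty_ge T.+1) => t H1 H2.
    have tpos : 0 < (t%:R : R) by apply: le_lt_trans H1; rewrite divr_ge0 // ltW.
    have := Vlow (t - T)%N; rewrite subnKC ?(ltnW H2) // natrB ?(ltnW H2) //.
    move: H1; rewrite ltr_pdivrMr // => H1.
    rewrite ler_pdivlMr //.
    have hT : 0 <= T%:R * d by rewrite mulr_ge0.
    have hV : - `|V T| <= V T by rewrite lerNl ler_normr lexx orbT.
    rewrite mulrBl; lra.
  have ce : e' + d = e by rewrite /d /e' -{1}(mul1r (e / c)) -mulrDl addrC -/c mulrC divfK ?gt_eqF.
  lra.
have c_gt0 : 0 < \sum_(q < Q) delta q * theta q ^+ 2.
  have hp : forall q, true -> 0 <= delta q * theta q ^+ 2.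
    by move=> q _; rewrite mulr_ge0 ?sqr_ge0 // ltW.
  rewrite lt_def sumr_ge0 ?andbT //.
  apply/negP => /eqP /(psumr_eq0P hp) h.
  have : \sum_(q < Q) theta q = 0.
    apply: big1 => q _; move: (h q isT) => /eqP.
    by rewrite mulf_eq0 (gt_eqF (Hdel q)) /= sqrf_eq0 => /eqP.
  by rewrite Hth1 => /eqP; rewrite oner_eq0.
have LE : L = (b - a) * (a * \sum_(q < Q) delta q * theta q ^+ 2).
  rewrite /L mulr_sumr mulr_sumr; apply: eq_bigr => q _.
  rewrite /w etaE etabE; ring.
move: key; rewrite LE pmulr_lge0 ?mulr_gt0 // subr_ge0 => ab.
by rewrite etaE etabE ler_wpM2l.
Qed.
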